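(* Let $q$ be a prime power and $n=q^4-1$. For $0\le a<q-1$ and $0\le b<q$, $$[(a,b,a,b),(a+1,b,a+1,b)]_M=\{(i,j,a,b):\ 0\le i<q \text{ and } b<j<q,\ \text{or}\ a<i<q \text{ and } j=b\}.$$ For $0\le b\le q-2$, $$[(q-1,b,q-1,b),(0,b+1,0,b+1)]_M=\{(i,j,q-1,b):\ 0\le i<q \text{ and } b<j<q\}.$$
   Context: Identify $\mathbb{Z}_n$ with $\{0,\ldots,n-1\}$. The $q$-adic 4-tuple $(a_0,a_1,a_2,a_3)$ denotes the integer $a_0+a_1q+a_2q^2+a_3q^3$ with $0\le a_i<q$. The cyclotomic coset of $x$ with respect to $q^2$ is $I_x=\{x,\,q^2x\bmod n\}$; $x$ is its minimal representative if it is its least element. The cosets of cardinality one are exactly those of elements $(a,b,a,b)$. An interlude is the set of integers lying strictly between two consecutive elements of cardinality-one cosets that are minimal representatives of cosets of cardinality $2$: for $0\le a<q-1$, $0\le b<q$, $[(a,b,a,b),(a+1,b,a+1,b)]_M$ is the set of integers $x$ with $(a,b,a,b)<x<(a+1,b,a+1,b)$ that are minimal representatives of a coset of cardinality $2$; for $0\le b\le q-2$, $[(q-1,b,q-1,b),(0,b+1,0,b+1)]_M$ is the set of integers $x$ with $(q-1,b,q-1,b)<x<(0,b+1,0,b+1)$ and $x<q^2x \bmod n$. *)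

(* Defs.v *)
From mathcomp Require Import all_boot.
Set Implicit Arguments. Unset Strict Implicit. Unset Printing Implicit Defensive.

Definition nq (q : nat) : nat := q ^ 4 - 1.

(* the q-adic 4-tuple (a0,a1,a2,a3) denotes a0 + a1 q + a2 q^2 + a3 q^3 *)
Definition qtup (q a0 a1 a2 a3 : nat) : nat := a0 + a1 * q + a2 * q ^ 2 + a3 * q ^ 3.

Definition cyc_coset (q x : nat) : seq nat := undup [:: x; (q ^ 2 * x) %% nq q].

Definition min_rep2 (q x : nat) : bool :=
  [&& x < nq q, size (cyc_coset q x) == 2 & all (fun y => x <= y) (cyc_coset q x)].

(* [lo, hi]_M : integers strictly between lo and hi that are minimal
   representatives of cosets of cardinality 2 *)
Definition interlude (q lo hi : nat) : pred nat :=
  fun x => (lo < x < hi) && min_rep2 q x.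

Definition prime_power (q : nat) : Prop := exists p k, prime p /\ 0 < k /\ q = p ^ k.

(* Main.v *)
Require Import Defs.
From mathcomp Require Import all_boot zify.

Lemma dig_lt q a b i j : a < q -> i < q ->
  (a + b * q < i + j * q) <-> (b < j \/ (a < i /\ j = b)).
Proof.
move=> ha hi; split.
- move=> h; case: (ltngtP b j) => hbj; [by left| |by right; split=>//; lia].
  exfalso. have : j * q + q <= b * q by rewrite -mulSnr leq_mul2r hbj orbT. lia.
- case=> [hbj|[hai ->]]; last lia.
  have : b * q + q <= j * q by rewrite -mulSnr leq_mul2r hbj orbT. lia.
Qed.

Lemma half_lt Q L H L' H' : L < Q -> L' < Q ->
  (L + H * Q < L' + H' * Q) <-> (H < H' \/ (L < L' /\ H' = H)).
Proof. by move=> h1 h2; apply: dig_lt. Qed.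

Lemma key q x : 1 < q -> min_rep2 q x = (x < nq q) && (x %/ q^2 < x %% q^2).
Proof.
move=> hq; rewrite /min_rep2 /cyc_coset.
set Q := q ^ 2.
have hQ : 1 < Q by rewrite /Q; nia.
have hn : nq q = Q * Q - 1 by rewrite /nq /Q -expnD.
case hx: (x < nq q) => //=.
have ex : x = x %% Q + x %/ Q * Q by rewrite addnC -divn_eq.
set L := x %% Q in ex *; set H := x %/ Q in ex *.
have hL : L < Q by rewrite ltn_mod; lia.
have hH : H < Q.
  rewrite ltn_divLR; last lia. lia.
have hy : (Q * x) %% nq q = H + L * Q.
  have -> : Q * x = H * nq q + (H + L * Q) by rewrite hn ex; nia.
  rewrite modnMDl modn_small // hn.
  have : x < Q * Q - 1 by rewrite -hn.
  rewrite ex.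
  nia.
rewrite hy.
rewrite /=.
rewrite inE /=.
case: (ltngtP H L) => c.
- have hxy : x < H + L * Q by rewrite ex; apply/half_lt => //; left.
  by rewrite (ltn_eqF hxy) /= leqnn (ltnW hxy).
- have hxy : H + L * Q < x by rewrite ex; apply/half_lt => //; left.
  by rewrite (gtn_eqF hxy) /= leqnn /= andbT leqNgt hxy.
- have e : H + L * Q = x.
    by rewrite ex c.
  by rewrite e eqxx.
Qed.

Lemma half_uniq Q L H L' H' : L < Q -> L' < Q ->
  L + H * Q = L' + H' * Q -> L = L' /\ H = H'.
Proof.
move=> h1 h2 e.
have n1 : ~ (L + H * Q < L' + H' * Q) by rewrite e ltnn.
have n2 : ~ (L' + H' * Q < L + H * Q) by rewrite e ltnn.
rewrite (half_lt Q L H L' H' h1 h2) in n1. rewrite (half_lt Q L' H' L H h2 h1) in n2.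
lia.
Qed.

Lemma interval q c x : 1 < q -> c.+1 < q ^ 2 ->
  interlude q (c + c * q ^ 2) (c.+1 + c.+1 * q ^ 2) x <->
  exists L, [/\ L < q ^ 2, c < L & x = L + c * q ^ 2].
Proof.
move=> hq hc; rewrite /interlude key //.
set Q := q ^ 2 in hc *.
have hQ : 1 < Q by rewrite /Q; nia.
have hn : nq q = Q * Q - 1 by rewrite /nq /Q -expnD.
rewrite hn.
have ex : x = x %% Q + x %/ Q * Q by rewrite addnC -divn_eq.
set L := x %% Q in ex *; set H := x %/ Q in ex *.
have hL : L < Q by rewrite ltn_mod; lia.
move: ex; clearbody L H => ex.
have hc0 : c < Q by lia.
split.
- case/andP => /andP [h1 h2] /andP [h3 h4].
  rewrite ex (half_lt Q c c L H hc0 hL) in h1.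
  rewrite ex (half_lt Q L H c.+1 c.+1 hL hc) in h2.
  exists L; split => //; last (rewrite ex; congr (_ + _ * _)); lia.
- case=> L' [h1 h2 h3].
  have [eL eH] := half_uniq Q L H L' c hL h1 (etrans (esym ex) h3).
  subst L' H.
  rewrite ex.
  have -> : (c + c * Q < L + c * Q) by apply/(half_lt Q c c L c hc0 hL); lia.
  have -> : (L + c * Q < c.+1 + c.+1 * Q) by apply/(half_lt Q L c c.+1 c.+1 hL hc); lia.
  have -> : L + c * Q < Q * Q - 1 by nia.
  by rewrite h2.
Qed.

Lemma qtup_eq q a b : qtup q a b a b = (a + b * q) + (a + b * q) * q ^ 2.
Proof. rewrite /qtup (expnS q 2). nia. Qed.

Lemma qtup_gen q i j a b : qtup q i j a b = (i + j * q) + (a + b * q) * q ^ 2.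
Proof. rewrite /qtup (expnS q 2). nia. Qed.

Lemma split_low q L : 0 < q -> L < q ^ 2 -> exists i j, [/\ L = i + j * q, i < q & j < q].
Proof.
move=> hq hL; exists (L %% q), (L %/ q); split.
- by rewrite addnC -divn_eq.
- by rewrite ltn_mod.
- by rewrite ltn_divLR // mulnn.
Qed.

Theorem mainTheorem13 (q : nat) (hq : prime_power q) :
  (forall a b, a < q - 1 -> b < q -> forall x,
     interlude q (qtup q a b a b) (qtup q a.+1 b a.+1 b) x <->
     exists i j, [/\ x = qtup q i j a b, i < q, j < q &
                     (b < j \/ (a < i /\ j = b))])
  /\
  (forall b, b <= q - 2 -> forall x,
     interlude q (qtup q (q - 1) b (q - 1) b) (qtup q 0 b.+1 0 b.+1) x <->
     exists i j, [/\ x = qtup q i j (q - 1) b, i < q, j < q & b < j]).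
Proof.
have q2 : 1 < q.
  case: hq => p [k [pp [k0 ->]]].
  have p1 := prime_gt1 pp.
  by rewrite -(exp1n k) ltn_exp2r.
have qsq : q ^ 2 = q * q by rewrite -mulnn.
split.
- move=> a b ha hb x.
  rewrite !qtup_eq.
  have -> : a.+1 + b * q = (a + b * q).+1 by lia.
  rewrite interval //; last by rewrite qsq; nia.
  split.
  + case=> L [hL hcL ->].
    have [i [j [eL hi hj]]] := split_low q L (ltnW q2) hL.
    exists i, j; split => //; first by rewrite qtup_gen eL.
    apply/(dig_lt q a b i j) => //; [lia | by rewrite -eL].
  + case=> i [j [-> hi hj hc]].
    exists (i + j * q); split; last by rewrite qtup_gen.
    * rewrite qsq; nia.
    * apply/(dig_lt q a b i j) => //; lia.
- move=> b hb x.
  rewrite !qtup_eq.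
  have -> : 0 + b.+1 * q = (q - 1 + b * q).+1 by rewrite mulSn; lia.
  rewrite interval //; last by rewrite qsq; nia.
  split.
  + case=> L [hL hcL ->].
    have [i [j [eL hi hj]]] := split_low q L (ltnW q2) hL.
    exists i, j; split => //; first by rewrite qtup_gen eL.
    have : b < j \/ (q - 1 < i /\ j = b) by apply/(dig_lt q (q-1) b i j) => //; [lia | by rewrite -eL].
    lia.
  + case=> i [j [-> hi hj hc]].
    exists (i + j * q); split; last by rewrite qtup_gen.
    * rewrite qsq; nia.
    * apply/(dig_lt q (q-1) b i j) => //; lia.
Qed.
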